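(* Let $V$ be a finite-dimensional real vector space and $\mathcal{S}=\{x_i\}_{1\le i\le n}$ a finite set of elements of $V$, labeled by integers $\{y_i\}_{1\le i\le n}\subset\{1,\dots,K\}$ with $K\le n$. For $k\in\{1,\dots,K\}$ let $C_k=\{x_i\in\mathcal{S}: y_i=k\}$, and let $S_k$ be a non-empty subset of $C_k$ with cardinality $|S_k|$. Let $W$ be a finite-dimensional real vector space with a fixed basis and $\mathcal{L}:V\to W$ a linear map. Let $A_{\mathcal{L}(S_k)}\in\mathbb{R}^{(1+\dim W)\times|S_k|}$ be the matrix whose columns are, for each element $s\in S_k$, the coordinate vector of $\mathcal{L}(s)$ with an additional entry $1$ appended at the bottom. If for every $x\in\mathcal{S}\setminus C_k$ the linear system $$A_{\mathcal{L}(S_k)}w=\begin{pmatrix}\mathcal{L}(x)\\1\end{pmatrix}$$ has no nonnegative solution $w\in\mathbb{R}_+^{|S_k|}$, then $S_k$ is pure in $\mathcal{S}$.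
   Context: The convex hull $\mathcal{E}(A)$ of a non-empty set $A\subset V$ is the smallest convex set containing $A$, equivalently the set of all convex combinations of finite subsets of $A$. Each $x_i\in\mathcal{S}$ carries the label $y_i$, written $\mathcal{K}(x_i)=y_i$. A non-empty subset $\mathcal{S}_{\mathcal{I}}\subset\mathcal{S}$ is called pure in $\mathcal{S}$ if $\mathcal{K}(\mathcal{S}\cap\mathcal{E}(\mathcal{S}_{\mathcal{I}}))$ is a singleton, i.e. all points of $\mathcal{S}$ lying in the convex hull of $\mathcal{S}_{\mathcal{I}}$ have the same label. *)

(* Defs.v *)
From HB Require Import structures.
From mathcomp Require Import all_boot all_order all_algebra.
From mathcomp Require Import reals.
Set Implicit Arguments. Unset Strict Implicit. Unset Printing Implicit Defensive.
Import Order.TTheory GRing.Theory Num.Theory.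
Local Open Scope ring_scope.

Section Defs.
Variable R : realType.

Definition conv_hull (V : lmodType R) (A : V -> Prop) : V -> Prop :=
  fun z => exists (m : nat) (lam : 'I_m -> R) (pts : 'I_m -> V),
    [/\ forall i, 0 <= lam i,
        \sum_(i < m) lam i = 1,
        forall i, A (pts i)
      & z = \sum_(i < m) lam i *: pts i].

(* A subset of S is described by the set
   I of its indices.  I is pure in S iff the set of labels of the points of S
   lying in the convex hull of {x_i | i in I} is a singleton. *)
Definition pure (V : lmodType R) (n : nat) (x : 'I_n -> V) (y : 'I_n -> nat)
  (I : {set 'I_n}) : Prop :=
  exists c : nat, forall l : nat,
    (exists j : 'I_n, conv_hull (fun v => exists2 i, i \in I & v = x i) (x j)
                      /\ y j = l) <-> l = c.

Definition augment (p : nat) (v : 'rV[R]_p) : 'cV[R]_(p + 1) :=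
  col_mx v^T (const_mx 1).

Definition aug_matrix (V : lmodType R) (p n : nat) (L : V -> 'rV[R]_p)
  (x : 'I_n -> V) (I : {set 'I_n}) : 'M[R]_(p + 1, #|I|) :=
  \matrix_(r, j) augment (L (x (enum_val j))) r ord0.

End Defs.

(* Main.v *)
Require Import Defs.
From HB Require Import structures.
From mathcomp Require Import all_boot all_order all_algebra.
From mathcomp Require Import reals.
Import Order.TTheory GRing.Theory Num.Theory.
Local Open Scope ring_scope.

Lemma augment_comb (R : realType) (V : vectType R) (p m : nat)
  (L : {linear V -> 'rV[R]_p}) (lam : 'I_m -> R) (pts : 'I_m -> V) r c :
  \sum_(i < m) lam i = 1 ->
  augment (L (\sum_(i < m) lam i *: pts i)) r c =
  \sum_(t < m) lam t * augment (L (pts t)) r ord0.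
Proof.
move=> Hs; rewrite linear_sum /augment.
have -> : c = ord0 by rewrite ord1.
case: (split_ordP r) => r' ->.
  rewrite col_mxEu mxE summxE; apply: eq_bigr => t _.
  by rewrite col_mxEu linearZ /= !mxE.
rewrite col_mxEd.
rewrite mxE -[LHS]Hs; apply: eq_bigr => t _.
by rewrite col_mxEd mxE mulr1.
Qed.

Theorem corollary1 (R : realType) (V : vectType R) (n K : nat)
  (x : 'I_n -> V) (y : 'I_n -> nat)
  (x_inj : injective x)
  (y_range : forall i, (1 <= y i <= K)%N)
  (K_le_n : (K <= n)%N)
  (k : nat) (k_range : (1 <= k <= K)%N)
  (Sk : {set 'I_n})
  (Sk_sub_Ck : forall i, i \in Sk -> y i = k)
  (Sk_nonempty : Sk != set0)
  (p : nat) (L : {linear V -> 'rV[R]_p}) :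
  (forall i : 'I_n, y i != k ->
     ~ exists w : 'cV[R]_#|Sk|,
         (forall j, 0 <= w j ord0) /\
         aug_matrix L x Sk *m w = augment (L (x i))) ->
  pure x y Sk.
Proof.
move=> H; exists k => l; split; last first.
  move=> ->; case/set0Pn: Sk_nonempty => i iS.
  exists i; split; last exact: Sk_sub_Ck.
  exists 1%N, (fun _ => 1), (fun _ => x i); split.
  - by move=> _; exact: ler01.
  - by rewrite big_ord1.
  - by move=> _; exists i.
  - by rewrite big_ord1 scale1r.
case=> j [[m [lam [pts [Hl Hs Hp Hx]]]] <-].
apply/eqP; apply/negPn/negP => Hne; apply: (H j Hne).
exists (\col_(j' < #|Sk|) \sum_(t < m) (x (enum_val j') == pts t)%:R * lam t).
split.
  by move=> j'; rewrite mxE; apply: sumr_ge0 => t _; apply: mulr_ge0.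
apply/matrixP => r c; rewrite Hx augment_comb // [LHS]mxE.
under eq_bigr => j' _ do rewrite [aug_matrix _ _ _ _ _]mxE [(\col__ _) _ _]mxE mulr_sumr.
rewrite exchange_big; apply: eq_bigr => t _.
have [i iS ->] := Hp t.
rewrite (bigD1 (enum_rank_in iS i)) // enum_rankK_in // eqxx mul1r.
rewrite big1 => [|j' nj]; first by rewrite [in RHS]mulrC; exact: addr0.
 case: eqP => [/x_inj e|]; last by rewrite mul0r mulr0.
by exfalso; move/eqP: nj; apply; apply: (can_inj (enum_valK_in iS)); rewrite enum_rankK_in // e.
Qed.
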